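(* For every sequence ${\mathbf s}=(s_1,\dots,s_l)$ in $\widehat{\mathcal S}$ with $l\ge1$ the sum defining ${\mathcal X}_T({\mathbf s})$ is direct: ${\mathcal X}_T({\mathbf s})=\Delta({\mathcal X}_T({\mathbf s}'))\oplus c^{\alpha_l}\big(\Delta({\mathcal X}_T({\mathbf s}'))\big)$. In particular, for every sequence ${\mathbf s}$ of length $l$, ${\mathcal X}_T({\mathbf s})$ is a graded free $S_T$-module of graded rank $(1+v^2)^l$ (i.e. it has a homogeneous basis with $\binom lk$ elements of degree $2k$ for each $k$).
   Context: $R$ is an irreducible reduced finite root system with positive roots $R^+$, simple roots $\Pi$, highest root $\gamma$; $X$ its weight lattice, $\widehat X=X\oplus\mathbb Z$, $\delta=(0,-1)$, affine roots $\widehat R=\{\alpha+n\delta\}$. $\widehat{\mathcal W}$ is the affine Weyl group generated by $s_{\alpha,n}(v,m)=(v-(\langle\alpha,v\rangle-mn)\alpha^\vee,m)$ on $V^*\oplus\mathbb Q$, acting contragrediently on $\widehat X$; $\widehat{\mathcal S}=\{s_{\alpha,0}:\alpha\in\Pi\}\cup\{s_{\gamma,1}\}$; the simple affine root attached to $s_{\alpha,0}$ is $\alpha$ and to $s_{\gamma,1}$ is $-\gamma+\delta$. $T$ is a commutative unital domain in which $2$ is not a zero divisor and in which all $\alpha\otimes1\in\widehat X\otimes T$, $\alpha\in\widehat R$, are nonzero. $S_T$ is the symmetric algebra of $\widehat X\otimes T$, graded with $\widehat X\otimes T$ in degree $2$. For ${\mathbf s}=(s_1,\dots,s_l)$, $I({\mathbf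 s})$ is the set of tuples $(i_1<\dots<i_n)$, $0\le n\le l$, in $\{1,\dots,l\}$, and $\operatorname{ev}(i_1,\dots,i_n)=s_{i_1}\cdots s_{i_n}$. For $l\ge1$ let ${\mathbf s}'=(s_1,\dots,s_{l-1})$; regard $I({\mathbf s}')\subset I({\mathbf s})$ and write $\gamma s_l$ for $\gamma$ with $l$ appended, so $I({\mathbf s})=I({\mathbf s}')\sqcup I({\mathbf s}')s_l$. $\Delta\colon\bigoplus_{I({\mathbf s}')}S_T\to\bigoplus_{I({\mathbf s})}S_T$ is given by $\Delta(z)_\gamma=\Delta(z)_{\gamma s_l}=z_\gamma$. For $\lambda\in\widehat X$, $c^\lambda$ is the endomorphism of $\bigoplus_{\sigma\in I({\mathbf s})}S_T$ multiplying the $\sigma$-component by $\operatorname{ev}(\sigma)(\lambda)\otimes1$. $\alpha_l$ is the simple affine root of $s_l$. Define ${\mathcal X}_T(\emptyset)=S_T$ and ${\mathcal X}_T({\mathbf s})=\Delta({\mathcal X}_T({\mathbf s}'))+c^{\alpha_l}(\Delta({\mathcal X}_T({\mathbf s}')))\subset\bigoplus_{\sigma\in I({\mathbf s})}S_T$. *)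

(* Defs.v *)
From HB Require Import structures.
From mathcomp Require Import all_boot all_order all_algebra.
From mathcomp Require Import mpoly.
Set Implicit Arguments. Unset Strict Implicit. Unset Printing Implicit Defensive.
Import Order.TTheory GRing.Theory Num.Theory.
Local Open Scope ring_scope.

(* pairing V x V^* -> Q, V^* identified with row vectors via the dot product *)
Definition pair n (x y : 'rV[rat]_n) : rat := \sum_i x 0 i * y 0 i.

Definition refl n (a av x : 'rV[rat]_n) : 'rV[rat]_n := x - pair x av *: a.

(* the matrix whose rows are the vectors of s (its row space = span of s) *)
Definition rows_mx n (s : seq 'rV[rat]_n) : 'M[rat]_(size s, n) :=
  \matrix_(i < size s) nth 0 s i.

Definition is_root_system n (R : seq 'rV[rat]_n) (cor : 'rV[rat]_n -> 'rV[rat]_n)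
  : Prop :=
  [/\ 0 \notin R,
      row_full (rows_mx R),
      (forall a, a \in R -> pair a (cor a) = 2),
      (forall a b, a \in R -> b \in R -> refl a (cor a) b \in R)
    & (forall a b, a \in R -> b \in R -> denq (pair b (cor a)) = 1)].

Definition reduced n (R : seq 'rV[rat]_n) : Prop :=
  forall (a : 'rV[rat]_n) (c : rat), a \in R -> c *: a \in R -> c = 1 \/ c = -1.

(* irreducible: R nonempty and not a direct sum R = R1 u R2 of two nonempty
   root systems with V = span R1 (+) span R2 *)
Definition irreducible n (R : seq 'rV[rat]_n) : Prop :=
  R <> [::] /\
  forall P : pred 'rV[rat]_n,
    has P R -> has (predC P) R ->
    (rows_mx (filter P R) :&: rows_mx (filter (predC P) R) != 0)%MS.

Definition is_base n (R : seq 'rV[rat]_n) (simple : 'I_n -> 'rV[rat]_n) : Prop :=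
  [/\ forall i, simple i \in R,
      row_free (\matrix_(i < n) simple i)
    & forall b, b \in R -> exists c : 'I_n -> int,
        b = \sum_i (c i)%:~R *: simple i /\
        ((forall i, 0 <= c i) \/ (forall i, c i <= 0))].

Definition is_highest n (R : seq 'rV[rat]_n) (simple : 'I_n -> 'rV[rat]_n)
  (g : 'rV[rat]_n) : Prop :=
  g \in R /\ forall b, b \in R -> exists c : 'I_n -> nat,
    g - b = \sum_i (c i)%:R *: simple i.

(* X^ = X (+) Z, realised inside V x Q;  delta = (0,-1) *)
Definition hat n := ('rV[rat]_n * rat)%type.
Definition delta n : hat n := (0, -1).

(* affine reflection s_{a,m} acting (contragrediently) on X^:
   s_{a,m}(lam,k) = (lam - <lam,a^v> a, k - m <lam,a^v>)
                  = (lam,k) - <lam,a^v> (a + m delta).   *)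
Definition saff n (a av : 'rV[rat]_n) (m : rat) (x : hat n) : hat n :=
  (x.1 - pair x.1 av *: a, x.2 - m * pair x.1 av).

(* the simple affine reflections: Some i = s_{alpha_i,0}, None = s_{gamma,1} *)
Definition Shat n := option 'I_n.

Section Affine.
Variables (n : nat) (cor : 'rV[rat]_n -> 'rV[rat]_n)
  (simple : 'I_n -> 'rV[rat]_n) (g : 'rV[rat]_n) (T : idomainType).

Definition sact (s : Shat n) : hat n -> hat n :=
  match s with
  | Some i => saff (simple i) (cor (simple i)) 0
  | None => saff g (cor g) 1
  end.

Definition sroot (s : Shat n) : hat n :=
  match s with
  | Some i => (simple i, 0)
  | None => (- g + (delta n).1, (delta n).2)
  end.

(* coordinates of (lam,k) in X^ = X (+) Z w.r.t. the Z-basis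
   (delta-coordinate, fundamental weights): index 0 = Z-part k,
   index i+1 = <lam, alpha_i^v>.  *)
Definition hcoord (x : hat n) (j : 'I_n.+1) : rat :=
  if unlift ord0 j is Some i then pair x.1 (cor (simple i)) else x.2.

(* x (x) 1 in X^ (x) T = T^(n+1) *)
Definition tens1 (x : hat n) : 'rV[T]_n.+1 :=
  \row_j ((numq (hcoord x j))%:~R : T).

(* S_T = Sym(X^ (x) T) = T[x_0,...,x_n]; its grading puts the x_j in degree 2 *)
Definition ST := {mpoly T[n.+1]}.

Definition sym1 (x : hat n) : ST := \sum_j tens1 x 0 j *: 'X_j.

Definition homogST (d : nat) (p : ST) : bool :=
  if odd d then p == 0 else p \is (d./2).-homog.

(* (+)_{sigma in I(s)} S_T for s of length l; I(s) = subsets of {1..l},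
   realised as {set 'I_l} (index i : 'I_l stands for i+1) *)
Definition Mod (l : nat) := {ffun {set 'I_l} -> ST}.

Definition smul l (p : ST) (z : Mod l) : Mod l := [ffun σ => p * z σ].

(* ev(i_1 < ... < i_k) = s_{i_1} ... s_{i_k}, as a map on X^ *)
Definition ev (s : seq (Shat n)) l (σ : {set 'I_l}) : hat n -> hat n :=
  foldr (fun i : 'I_l => fun f => sact (nth None s (val i)) \o f) id [seq i <- enum 'I_l | i \in σ].

(* Delta(z)_gamma = Delta(z)_{gamma s_l} = z_gamma *)
Definition Delta l (z : Mod l) : Mod l.+1 :=
  [ffun σ : {set 'I_l.+1} => z [set i : 'I_l | widen_ord (leqnSn l) i \in σ]].

Definition cmul (s : seq (Shat n)) l (lam : hat n) (z : Mod l) : Mod l :=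
  [ffun σ => sym1 (ev s σ lam) * z σ].

(* XT s l z  <->  z lies in X_T((s_1,...,s_l)), where s_i = nth None s (i-1) *)
Fixpoint XT (s : seq (Shat n)) (l : nat) : Mod l -> Prop :=
  match l as l0 return Mod l0 -> Prop with
  | 0 => fun _ => True
  | l'.+1 => fun z => exists z1 z2 : Mod l',
      [/\ XT s z1, XT s z2 &
          z = Delta z1 + cmul s (sroot (nth None s l')) (Delta z2)]
  end.

End Affine.

(* Main.v *)
Require Import Defs.
From HB Require Import structures.
From mathcomp Require Import all_boot all_order all_algebra.
From mathcomp Require Import mpoly.
Import Order.TTheory GRing.Theory Num.Theory.
Local Open Scope ring_scope.
Set Implicit Arguments. Unset Strict Implicit.

Section Proof6.
Variables (n : nat) (R : seq 'rV[rat]_n) (cor : 'rV[rat]_n -> 'rV[rat]_n)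
  (simple : 'I_n -> 'rV[rat]_n) (g : 'rV[rat]_n) (T : idomainType)
  (s : seq (option 'I_n)).

Definition hneg (x : hat n) : hat n := (- x.1, - x.2).

Lemma pairN (x y : 'rV[rat]_n) : pair (- x) y = - pair x y.
Proof. rewrite /pair -sumrN; apply: eq_bigr => i _; by rewrite mxE mulNr. Qed.

Lemma saffN a av m x : saff a av m (hneg x) = hneg (saff a av m x).
Proof. by rewrite /saff /hneg /= pairN scaleNr mulrN !opprD. Qed.

Lemma sactN o x : sact cor simple g o (hneg x) = hneg (sact cor simple g o x).
Proof. by case: o => [i|]; rewrite /= saffN. Qed.

Definition evl (xs : seq nat) : hat n -> hat n :=
  foldr (fun k f => sact cor simple g (nth None s k) \o f) id xs.

Lemma evE l (σ : {set 'I_l}) :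
  ev cor simple g s σ = evl [seq val i | i <- [seq i <- enum 'I_l | i \in σ]].
Proof. by rewrite /ev /evl foldr_map. Qed.

Lemma evlN xs x : evl xs (hneg x) = hneg (evl xs x).
Proof. by rewrite /evl; elim: xs => //= k xs IH; rewrite IH sactN. Qed.

Lemma evN l (σ : {set 'I_l}) x :
  ev cor simple g s σ (hneg x) = hneg (ev cor simple g s σ x).
Proof. by rewrite evE evlN. Qed.

Lemma evlC xs (h : hat n -> hat n) x :
  foldr (fun k f => sact cor simple g (nth None s k) \o f) h xs x = evl xs (h x).
Proof. by rewrite /evl; elim: xs => //= k xs IH; rewrite IH. Qed.

Lemma ev_max l (τ : {set 'I_l.+1}) x : ord_max \notin τ ->
  ev cor simple g s (ord_max |: τ) x
  = ev cor simple g s τ (sact cor simple g (nth None s l) x).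
Proof.
move=> Hτ; rewrite !evE enum_ordSr !filter_rcons setU11 (negbTE Hτ) map_rcons.
have -> : [seq i <- [seq widen_ord (leqnSn l) i | i <- enum 'I_l] | i \in ord_max |: τ]
   = [seq i <- [seq widen_ord (leqnSn l) i | i <- enum 'I_l] | i \in τ].
  apply: eq_in_filter => y /mapP [i _ ->].
  rewrite !inE; suff -> : (widen_ord (leqnSn l) i == ord_max) = false by [].
  by rewrite -val_eqE /= ltn_eqF.
by rewrite /evl foldr_rcons evlC.
Qed.

Lemma Delta_max l (z : Mod n T l) (σ : {set 'I_l.+1}) :
  Delta z (ord_max |: σ) = Delta z σ /\ Delta z (σ :\ ord_max) = Delta z σ.
Proof.
have H (i : 'I_l) : (widen_ord (leqnSn l) i == ord_max) = false.
  by rewrite -val_eqE /= ltn_eqF.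
by rewrite !ffunE; split; congr (z _); apply/setP => i; rewrite !inE H.
Qed.

Lemma sym1N x : sym1 cor simple T (hneg x) = - sym1 cor simple T x.
Proof.
rewrite /sym1 -sumrN; apply: eq_bigr => j _; rewrite -scaleNr; congr (_ *: _).
rewrite !mxE /hcoord /=; case: (unlift ord0 j) => [i|]; by rewrite ?pairN numqN mulrNz.
Qed.

Lemma ST_selfneg (H2 : forall x : T, 2%:R * x = 0 -> x = 0) (p : ST n T) :
  p = - p -> p = 0.
Proof.
move=> E; apply/mpolyP => m; rewrite mcoeff0; apply: H2.
have e : p@_m = - p@_m by rewrite {1}E mcoeffN.
by rewrite mulr_natl mulr2n {1}e addNr.
Qed.

Lemma cmulE l lam (z : Mod n T l) σ :
  cmul cor simple g s lam z σ = sym1 cor simple T (ev cor simple g s σ lam) * z σ.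
Proof. by rewrite ffunE. Qed.

Lemma direct (H2 : forall x : T, 2%:R * x = 0 -> x = 0)
  (Hr : forall o, sact cor simple g o (sroot simple g o) = hneg (sroot simple g o))
  l (z1 z2 : Mod n T l) :
  Delta z1 = cmul cor simple g s (sroot simple g (nth None s l)) (Delta z2) ->
  Delta z1 = 0.
Proof.
move=> E; apply/ffunP => σ; rewrite [RHS]ffunE.
have [_ <-] := Delta_max z1 σ.
set τ := σ :\ ord_max.
have Hτ : ord_max \notin τ by rewrite setD11.
apply: (ST_selfneg H2).
rewrite -{1}(proj1 (Delta_max z1 τ)).
rewrite {1}E [in RHS]E !cmulE ev_max // Hr evN sym1N mulNr.
by rewrite (proj1 (Delta_max z2 τ)).
Qed.

Lemma sroot_refl (HR : is_root_system R cor) (Hb : is_base R simple)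
  (Hg : is_highest R simple g) o :
  sact cor simple g o (sroot simple g o) = hneg (sroot simple g o).
Proof.
case: HR => _ _ H2 _ _; case: Hb => Hs _ _; case: Hg => Hg _.
case: o => [i|] /=; rewrite /saff /hneg /delta /=; congr (_, _).
- by rewrite H2 // scaler_nat mulr2n opprD addrA subrr add0r.
- by rewrite mul0r subrr oppr0.
- by rewrite addr0 pairN H2 // scaleNr !opprK scaler_nat mulr2n addrA addNr add0r.
- by rewrite addr0 pairN H2 // mul1r !opprK.
Qed.

Definition good (x : hat n) := x.1 \in R /\ exists m : int, x.2 = m%:~R.

Lemma good_sact (HR : is_root_system R cor) (Hb : is_base R simple)
  (Hg : is_highest R simple g) o x : good x -> good (sact cor simple g o x).
Proof.
case: HR => _ _ _ Hrefl Hint; case: Hb => Hs _ _; case: Hg => Hg _.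
case=> Hx [m Hm]; case: o => [i|] /=; rewrite /saff /=; split.
- exact: (Hrefl _ _ (Hs i) Hx).
- by exists m; rewrite mul0r subr0.
- exact: (Hrefl _ _ Hg Hx).
- exists (m - numq (pair x.1 (cor g))).
  have Hp : (numq (pair x.1 (cor g)))%:~R = pair x.1 (cor g).
    by rewrite numqE (Hint _ _ Hg Hx) mulr1.
  by rewrite mul1r Hm mulrzBr Hp.
Qed.

Lemma good_sroot (HR : is_root_system R cor) (Hb : is_base R simple)
  (Hg : is_highest R simple g) o : good (sroot simple g o).
Proof.
case: HR => _ _ H2 Hrefl _; case: Hb => Hs _ _; case: Hg => Hg _.
case: o => [i|] /=; rewrite /delta /=; split.
- exact: Hs.
- by exists 0.
- have := Hrefl _ _ Hg Hg; rewrite /refl H2 // scaler_nat mulr2n opprD addrA subrr add0r.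
  by rewrite addr0.
- by exists (-1).
Qed.

Lemma good_ev (HR : is_root_system R cor) (Hb : is_base R simple)
  (Hg : is_highest R simple g) l (σ : {set 'I_l}) x :
  good x -> good (ev cor simple g s σ x).
Proof.
move=> Hx; rewrite evE /evl; elim: [seq _ | _ <- _] => //= k xs IH.
exact: good_sact.
Qed.

Lemma sym1_neq0 x : tens1 cor simple T x != 0 -> sym1 cor simple T x != 0.
Proof.
apply: contra => /eqP H; apply/eqP/rowP => j; rewrite [RHS]mxE.
have := congr1 (mcoeff U_(j)) H; rewrite mcoeff0 /sym1 raddf_sum /= => <-.
rewrite (bigD1 j) //= big1 ?addr0.
- by rewrite mcoeffZ mcoeffXU eqxx mulr1.
- by move=> k /negbTE Hk; rewrite mcoeffZ mcoeffXU Hk mulr0.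
Qed.

Lemma DeltaN l (z : Mod n T l) : Delta (- z) = - Delta z.
Proof. by apply/ffunP => σ; rewrite !ffunE. Qed.

Lemma cmulN l lam (z : Mod n T l) :
  cmul cor simple g s lam (- z) = - cmul cor simple g s lam z.
Proof. by apply/ffunP => σ; rewrite !ffunE mulrN. Qed.

Lemma Delta_sum l (I : finType) (F : I -> Mod n T l) :
  Delta (\sum_i F i) = \sum_i Delta (F i).
Proof.
apply/ffunP => σ; rewrite ffunE !sum_ffunE; apply: eq_bigr => i _; by rewrite ffunE.
Qed.

Lemma cmul_sum l lam (I : finType) (F : I -> Mod n T l) :
  cmul cor simple g s lam (\sum_i F i) = \sum_i cmul cor simple g s lam (F i).
Proof.
apply/ffunP => σ; rewrite ffunE !sum_ffunE mulr_sumr; apply: eq_bigr => i _.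
by rewrite ffunE.
Qed.

Lemma Delta_smul l p (z : Mod n T l) : Delta (smul p z) = smul p (Delta z).
Proof. by apply/ffunP => σ; rewrite !ffunE. Qed.

Lemma cmul_smul l lam p (z : Mod n T l) :
  cmul cor simple g s lam (smul p z) = smul p (cmul cor simple g s lam z).
Proof. by apply/ffunP => σ; rewrite !ffunE mulrCA. Qed.

Fixpoint idx (l : nat) : finType :=
  match l with 0 => unit | l'.+1 => Finite.clone (idx l' * bool)%type _ end.

Fixpoint deg (l : nat) : idx l -> nat :=
  match l return idx l -> nat with
  | 0 => fun _ => 0%N
  | l'.+1 => fun j => (deg j.1 + j.2)%N
  end.

Fixpoint bas (l : nat) : idx l -> Mod n T l :=
  match l return idx l -> Mod n T l with
  | 0 => fun _ => [ffun _ => 1]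
  | l'.+1 => fun j => if j.2
      then cmul cor simple g s (sroot simple g (nth None s l')) (Delta (bas j.1))
      else Delta (bas j.1)
  end.

Lemma sum_idxS l (V : nmodType) (F : idx l.+1 -> V) :
  \sum_j F j = \sum_(i : idx l) (F (i, true) + F (i, false)).
Proof.
transitivity (\sum_(i : idx l) \sum_(b : bool) F (i, b)).
  by rewrite pair_bigA; apply: eq_bigr => -[i b] _.
by apply: eq_bigr => i _; rewrite big_bool.
Qed.

Lemma sum_unit (V : nmodType) (F : unit -> V) : \sum_(j : unit) F j = F tt.
Proof. by rewrite (big_pred1 tt) //; case. Qed.

Lemma sum_bas l (p : idx l.+1 -> ST n T) :
  \sum_j smul (p j) (bas j) =
  Delta (\sum_i smul (p (i, false)) (bas i)) +
  cmul cor simple g s (sroot simple g (nth None s l))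
    (Delta (\sum_i smul (p (i, true)) (bas i))).
Proof.
rewrite sum_idxS big_split /= addrC !Delta_sum cmul_sum; congr (_ + _).
  by apply: eq_bigr => i _; rewrite Delta_smul.
by apply: eq_bigr => i _; rewrite Delta_smul cmul_smul.
Qed.

Lemma set_I0 (σ : {set 'I_0}) : σ = set0.
Proof. by apply/setP => -[i Hi]. Qed.

Lemma span l (x : Mod n T l) :
  XT cor simple g s x <-> exists p : idx l -> ST n T, x = \sum_j smul (p j) (bas j).
Proof.
elim: l x => [|l IH] x.
  split=> // _; exists (fun _ => x set0); rewrite sum_unit.
  by apply/ffunP => σ; rewrite !ffunE mulr1 (set_I0 σ).
split.
  move=> /= [z1 [z2 [H1 H2 ->]]].
  have [p1 ->] := (IH z1).1 H1; have [p2 ->] := (IH z2).1 H2.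
  by exists (fun j : idx l.+1 => if j.2 then p2 j.1 else p1 j.1); rewrite sum_bas.
move=> [p ->]; rewrite sum_bas /=.
exists (\sum_i smul (p (i, false)) (bas i)), (\sum_i smul (p (i, true)) (bas i)).
by split => //; apply/IH; eexists.
Qed.

Lemma Delta_inj l (z : Mod n T l) : Delta z = 0 -> z = 0.
Proof.
move=> H; apply/ffunP => τ; have := congr1 (fun f : Mod n T l.+1 => f (widen_ord (leqnSn l) @: τ)) H.
rewrite !ffunE => <-; congr (z _); apply/setP => i; rewrite inE mem_imset //.
by move=> a b /(congr1 val) /= /val_inj.
Qed.

Lemma indep (H2 : forall x : T, 2%:R * x = 0 -> x = 0)
  (Hr : forall o, sact cor simple g o (sroot simple g o) = hneg (sroot simple g o))
  (Hnz : forall k L (σ : {set 'I_L}),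
     sym1 cor simple T (ev cor simple g s σ (sroot simple g (nth None s k))) != 0)
  l (p : idx l -> ST n T) :
  \sum_j smul (p j) (bas j) = 0 -> forall j, p j = 0.
Proof.
elim: l p => [|l IH] p.
  rewrite sum_unit => /ffunP /(_ set0); rewrite !ffunE mulr1 => H []; exact: H.
rewrite sum_bas; set Z1 := \sum_i _; set Z2 := \sum_i _ => E.
have E1 : Delta Z1 = cmul cor simple g s (sroot simple g (nth None s l)) (Delta (- Z2)).
  by rewrite DeltaN cmulN; apply/eqP; rewrite -addr_eq0; apply/eqP.
have D1 := direct H2 Hr E1.
have Z10 := Delta_inj D1.
move: E; rewrite D1 add0r => E.
have : Delta Z2 = 0.
  apply/ffunP => σ; have := congr1 (fun f : Mod n T l.+1 => f σ) E; rewrite /= cmulE !ffunE.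
  by move/eqP; rewrite mulf_eq0 (negbTE (Hnz _ _ _)) /= => /eqP.
move/Delta_inj => Z20.
move=> [i b]; case: b; [exact: (IH _ Z20) | exact: (IH _ Z10)].
Qed.

Lemma sym1_homog x : sym1 cor simple T x \is 1.-homog.
Proof.
rewrite /sym1; apply: rpred_sum => j _; apply: rpredZ.
have := dhomogX T mdeg 1 U_(j). by move=> ->; apply/eqP; exact: mdeg1.
Qed.

Lemma bas_homog l (j : idx l) σ : bas j σ \is (deg j).-homog.
Proof.
elim: l j σ => [|l IH] j σ.
  by rewrite ffunE dhomog1.
move: j => [i b]; case: b => /=.
  by rewrite cmulE ffunE addn1; exact: (dhomogM (sym1_homog _) (IH _ _)).
by rewrite ffunE addn0; exact: IH.
Qed.

Lemma cnt_deg l k : (\sum_(i : idx l) nat_of_bool (deg i == k))%N = 'C(l, k).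
Proof.
elim: l k => [|l IH] k.
  by rewrite sum_unit bin0n /= eq_sym.
rewrite sum_idxS /= big_split /=.
case: k => [|k].
  rewrite big1 ?add0n; last by move=> i _; rewrite addn1.
  rewrite bin0 -(bin0 l) -(IH 0%N); apply: eq_bigr => i _; by rewrite addn0.
rewrite binS -!IH addnC; congr (_ + _)%N; apply: eq_bigr => i _; by rewrite ?addn1 ?addn0 ?eqSS.
Qed.

Lemma card_deg l k : #|[pred i : idx l | deg i == k]| = 'C(l, k).
Proof.
rewrite -sum1_card big_mkcond /= -cnt_deg; apply: eq_bigr => i _.
by rewrite inE; case: (deg i == k).
Qed.

End Proof6.
Theorem lemma6p2 (n : nat) (R : seq 'rV[rat]_n) (cor : 'rV[rat]_n -> 'rV[rat]_n)
  (simple : 'I_n -> 'rV[rat]_n) (g : 'rV[rat]_n) (T : idomainType) :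
  is_root_system R cor -> reduced R -> irreducible R ->
  is_base R simple -> is_highest R simple g ->
  (* 2 is not a zero divisor in T *)
  (forall x : T, 2%:R * x = 0 -> x = 0) ->
  (* alpha (x) 1 <> 0 for every affine root alpha + m delta *)
  (forall (a : 'rV[rat]_n) (m : int), a \in R ->
     tens1 cor simple T (a + m%:~R *: (delta n).1, m%:~R * (delta n).2) != 0) ->
  forall s : seq (option 'I_n),
  (* the sum is direct, for l = size s >= 1 *)
  (forall l', size s = l'.+1 ->
     (forall x : Mod n T l'.+1,
        XT cor simple g s x <->
        exists z1 z2, [/\ XT cor simple g s z1, XT cor simple g s z2 &
          x = Delta z1 + cmul cor simple g s (sroot simple g (nth None s l')) (Delta z2)])
     /\
     (forall x : Mod n T l'.+1,
        (exists z1, XT cor simple g s (l := l') z1 /\ x = Delta z1) ->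
        (exists z2, XT cor simple g s (l := l') z2 /\
           x = cmul cor simple g s (sroot simple g (nth None s l')) (Delta z2)) ->
        x = 0))
  /\
  (* graded free of graded rank (1 + v^2)^l *)
  (exists (I : finType) (deg : I -> nat) (b : I -> Mod n T (size s)),
     [/\ forall k, #|[pred i | deg i == k]| = 'C(size s, k),
         forall i, XT cor simple g s (b i) /\ forall σ, homogST (2 * deg i) (b i σ),
         forall x : Mod n T (size s),
           XT cor simple g s x <-> exists p : I -> ST n T, x = \sum_i smul (p i) (b i)
       & forall p : I -> ST n T, \sum_i smul (p i) (b i) = 0 -> forall i, p i = 0]).
Proof.
move=> HR _ _ Hb Hg H2 Hne s.
have Hr := sroot_refl HR Hb Hg.
have Hnz : forall k L (σ : {set 'I_L}),
    sym1 cor simple T (ev cor simple g s σ (sroot simple g (nth None s k))) != 0.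
  move=> k L σ; apply: sym1_neq0.
  have [Ha [m Hm]] := good_ev s HR Hb Hg σ (good_sroot HR Hb Hg (nth None s k)).
  move: Ha Hm; case: (ev _ _ _ _ _ _) => a b /= Ha ->.
  have := Hne a (- m) Ha; rewrite /delta /= scaler0 addr0 mulrN1 mulrNz opprK.
  by [].
split.
  move=> l' _; split; first by move=> x; split.
  move=> x [z1 [_ E1]] [z2 [_ E2]]; rewrite E1; apply: (direct (s:=s) (z2:=z2) H2 Hr).
  by rewrite -E1.
exists (idx (size s)), (@deg (size s)), (@bas n cor simple g T s (size s)).
split.
- exact: card_deg.
- move=> i; split.
    by apply/span; exists (fun j => if j == i then 1 else 0);
      rewrite (bigD1 i) //= eqxx big1 ?addr0;
      [apply/ffunP => σ; rewrite ffunE mul1r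
      | move=> j /negbTE ->; apply/ffunP => σ; rewrite !ffunE mul0r].
  move=> σ; rewrite /homogST mul2n odd_double doubleK.
  exact: bas_homog.
- move=> x; exact: span.
- exact: (indep H2 Hr Hnz).
Qed.
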